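(* Let $N\ge3$ and suppose $k_m\ge1$ for all $0\le m\le r-1$. Then a function $f$ on $\mathcal{V}_{N,{\bf k}}$ satisfies $L_{N,{\bf k}}f=Nf$ if and only if $Pf=\frac{1}{N-1}f$; that is, the eigenspace of the graph Laplacian $L_{N,{\bf k}}$ for the eigenvalue $N$ coincides with the eigenspace of $P$ for the eigenvalue $1/(N-1)$.
   Context: Fix $N\ge3$, $r\ge2$, distinct reals $e_0,\dots,e_{r-1}$, and ${\bf k}=(k_0,\dots,k_{r-1})$ of nonnegative integers with $\sum_m k_m=N$. The multislice $\mathcal{V}_{N,{\bf k}}$ is the set of $x\in\{e_0,\dots,e_{r-1}\}^N$ with exactly $k_m$ coordinates equal to $e_m$ for each $m$, and $\mu_{N,{\bf k}}$ is the uniform probability measure on it. For $i<j$, $\pi_{i,j}x$ swaps coordinates $i$ and $j$. The graph Laplacian is $L_{N,{\bf k}}f(x)=\sum_{y}(f(x)-f(y))$, the sum over all $y\neq x$ of the form $y=\pi_{i,j}x$. For $1\le\ell\le N$, $P_\ell$ is the orthogonal projection in $L^2(\mu_{N,{\bf k}})$ onto functions depending only on $x_\ell$ (i.e. $P_\ell f(x)$ is the average of $f(y)$ over $y\in\mathcal{V}_{N,{\bf k}}$ with $y_\ell=x_\ell$), and $P=\frac1N\sum_{\ell=1}^N P_\ell$. *)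

(* Defs.v *)
From mathcomp Require Import all_boot all_order all_algebra all_fingroup.
From mathcomp Require Import perm.
Set Implicit Arguments. Unset Strict Implicit. Unset Printing Implicit Defensive.
Import Order.TTheory GRing.Theory Num.Theory.
Local Open Scope ring_scope.

Section Multislice.
Variables (R : realFieldType) (N r : nat) (e : 'I_r -> R) (k : 'I_r -> nat).

Definition ms_pattern (c : {ffun 'I_N -> 'I_r}) : bool :=
  [forall m : 'I_r, #|[set i : 'I_N | c i == m]| == k m].

Definition multislice : seq 'rV[R]_N :=
  undup [seq \row_(i < N) e (c i) | c : {ffun 'I_N -> 'I_r} <- enum ms_pattern].

Definition swap_coords (i j : 'I_N) (x : 'rV[R]_N) : 'rV[R]_N :=
  \row_(t < N) x 0 (tperm i j t).

Definition ms_laplacian (f : 'rV[R]_N -> R) (x : 'rV[R]_N) : R :=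
  \sum_(y <- multislice | (y != x) &&
        [exists i : 'I_N, exists j : 'I_N, (i < j)%N && (y == swap_coords i j x)])
     (f x - f y).

Definition ms_proj (l : 'I_N) (f : 'rV[R]_N -> R) (x : 'rV[R]_N) : R :=
  (\sum_(y <- multislice | y 0 l == x 0 l) f y) /
  (count (fun y : 'rV[R]_N => y 0 l == x 0 l) multislice)%:R.

Definition ms_P (f : 'rV[R]_N -> R) (x : 'rV[R]_N) : R :=
  N%:R^-1 * \sum_(l < N) ms_proj l f x.

End Multislice.

(* Main.v *)
Require Import Defs.
From mathcomp Require Import all_boot all_order all_algebra all_fingroup.
From mathcomp Require Import perm ring lra zify.
Import Order.TTheory GRing.Theory Num.Theory.
Local Open Scope ring_scope.
Set Implicit Arguments. Unset Strict Implicit. Unset Printing Implicit Defensive.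
Section Abs.
Variables (R : realFieldType) (N r : nat).
Local Notation col := {ffun 'I_N -> 'I_r}.

Definition sw (i j : 'I_N) (c : col) : col := [ffun t => c (tperm i j t)].

Definition inO (A : {set 'I_N}) (c0 c : col) : bool :=
  [forall i, (i \notin A) ==> (c i == c0 i)] &&
  [forall m, #|[set i in A | c i == m]| == #|[set i in A | c0 i == m]|].

Lemma swK (i j : 'I_N) : involutive (sw i j).
Proof. by move=> c; apply/ffunP => t; rewrite !ffunE tpermK. Qed.

Lemma swC (i j : 'I_N) (c : col) : sw i j c = sw j i c.
Proof. by apply/ffunP => t; rewrite !ffunE tpermC. Qed.

Lemma inO_refl (A : {set 'I_N}) (c0 : col) : inO A c0 c0.
Proof.
by apply/andP; split; [apply/forallP => i; apply/implyP | apply/forallP => m].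
Qed.

Lemma inO_sw1 (A : {set 'I_N}) (c0 c : col) (i j : 'I_N) : i \in A -> j \in A -> inO A c0 c -> inO A c0 (sw i j c).
Proof.
move=> iA jA /andP[/forallP H1 /forallP H2]; apply/andP; split.
  apply/forallP => t; apply/implyP => tA; rewrite ffunE tpermD.
  - exact: (implyP (H1 t)).
  - by apply/eqP => E; move: tA; rewrite -E iA.
  - by apply/eqP => E; move: tA; rewrite -E jA.
apply/forallP => m; rewrite -(eqP (H2 m)).
have -> : [set t in A | sw i j c t == m] =
   tperm i j @^-1: [set t in A | c t == m].
  apply/setP => t; rewrite !inE ffunE.
  congr (_ && _).
  case: (tpermP i j t) => [->|->|/eqP ? /eqP ?]; rewrite ?iA ?jA //.
rewrite card_preimset //; exact: perm_inj.
Qed.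

Lemma inO_sw (A : {set 'I_N}) (c0 c : col) (i j : 'I_N) : i \in A -> j \in A -> inO A c0 (sw i j c) = inO A c0 c.
Proof.
move=> iA jA; apply/idP/idP; last exact: inO_sw1.
by move=> /(inO_sw1 iA jA); rewrite swK.
Qed.

Lemma sum_sw (A : {set 'I_N}) (c0 : col) (i j : 'I_N) (F : col -> R) : i \in A -> j \in A ->
  \sum_(c | inO A c0 c) F c = \sum_(c | inO A c0 c) F (sw i j c).
Proof.
move=> iA jA; rewrite (reindex_inj (can_inj (swK i j))) /=.
by apply: eq_bigl => c; rewrite inO_sw.
Qed.

Lemma inO_trans (A : {set 'I_N}) (c0 c c' : col) : inO A c0 c -> inO A c c' = inO A c0 c'.
Proof.
move=> /andP[/forallP H1 /forallP H2]; apply/idP/idP => /andP[/forallP G1 /forallP G2].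
  apply/andP; split; apply/forallP.
    move=> t; apply/implyP => tA; rewrite (eqP (implyP (G1 t) tA)).
    exact: (implyP (H1 t)).
  by move=> m; rewrite (eqP (G2 m)).
apply/andP; split; apply/forallP.
  move=> t; apply/implyP => tA; rewrite (eqP (implyP (G1 t) tA)).
  by rewrite (eqP (implyP (H1 t) tA)).
by move=> m; rewrite (eqP (G2 m)) (eqP (H2 m)).
Qed.

Lemma sum_pos_const (A : {set 'I_N}) (c0 c : col) (F : 'I_r -> R) : inO A c0 c ->
  \sum_(j in A) F (c j) = \sum_(j in A) F (c0 j).
Proof.
have E : forall d : col, \sum_(j in A) F (d j) =
    \sum_m F m * #|[set i in A | d i == m]|%:R.
  move=> d; rewrite (partition_big d predT) //=.
  apply: eq_bigr => m _.
  rewrite (eq_bigr (fun _ => F m)); last by move=> j /andP[_ /eqP ->].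
  rewrite sumr_const mulr_natr; congr (_ *+ _).
  by apply: eq_card => j; rewrite inE.
move=> /andP[_ /forallP H2]; rewrite !E; apply: eq_bigr => m _.
by rewrite (eqP (H2 m)).
Qed.


Lemma cnt_split (A : {set 'I_N}) (l : 'I_N) (P : pred 'I_N) : l \in A ->
  #|[set i in A | P i]| = (P l + #|[set i in A :\ l | P i]|)%N.
Proof.
move=> lA; rewrite (cardsD1 l) inE lA /=; congr (_ + _)%N.
by apply: eq_card => i; rewrite !inE andbA.
Qed.

Lemma fiberE (A : {set 'I_N}) (c0 c1 c : col) (l : 'I_N) :
  l \in A -> inO A c0 c1 ->
  (inO A c0 c && (c l == c1 l)) = inO (A :\ l) c1 c.
Proof.
move=> lA H1; rewrite -(inO_trans c H1).
apply/idP/idP.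
  case/andP => /andP[/forallP G1 /forallP G2] /eqP El.
  apply/andP; split; apply/forallP.
    move=> t; apply/implyP; rewrite !inE negb_and negbK.
    case/orP => [/eqP -> | tA]; first by rewrite El.
    exact: (implyP (G1 t)).
  move=> m; move/eqP: (G2 m); rewrite !(cnt_split _ lA) El => /eqP.
  by rewrite eqn_add2l.
case/andP => /forallP G1 /forallP G2.
have El : c l = c1 l by apply/eqP; apply: (implyP (G1 l)); rewrite !inE eqxx.
rewrite El eqxx andbT; apply/andP; split; apply/forallP.
  move=> t; apply/implyP => tA; apply: (implyP (G1 t)).
  by rewrite !inE (negbTE tA) andbF.
by move=> m; rewrite !(cnt_split _ lA) El (eqP (G2 m)).
Qed.

Definition phi (A : {set 'I_N}) (c0 : col) (g : col -> R) (l : 'I_N) (a : 'I_r) : R :=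
  (\sum_(c | inO A c0 c && (c l == a)) g c) /
  #|[set c | inO A c0 c && (c l == a)]|%:R.

Lemma sum_card_avg (P : pred col) (g : col -> R) :
  \sum_(c | P c) g c =
  \sum_(c | P c) ((\sum_(c | P c) g c) / #|[set c | P c]|%:R).
Proof.
rewrite sumr_const.
have [/eqP H0|Hn] := eqVneq #|[set c | P c]| 0%N.
  rewrite cards_eq0 in H0.
  have HP : forall c, P c = false.
    by move=> c; apply/negbTE; apply/negP => Pc; move: H0 => /eqP/setP/(_ c); rewrite !inE Pc.
  by rewrite big_pred0 // mul0r mul0rn.
have -> : #|[pred c | P c]| = #|[set c | P c]| by apply: eq_card => c; rewrite inE.
by rewrite -[_ *+ _]mulr_natr mulfVK // pnatr_eq0.
Qed.

Lemma fiber_sum (A : {set 'I_N}) (c0 : col) (g : col -> R) (l : 'I_N) (F : 'I_r -> R) :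
  \sum_(c | inO A c0 c) g c * F (c l) =
  \sum_(c | inO A c0 c) phi A c0 g l (c l) * F (c l).
Proof.
rewrite (partition_big (fun c : col => c l) predT) //=.
rewrite [RHS](partition_big (fun c : col => c l) predT) //=.
apply: eq_bigr => a _.
rewrite (eq_bigr (fun c => g c * F a)); last by move=> c /andP[_ /eqP ->].
rewrite [RHS](eq_bigr (fun c => phi A c0 g l a * F a)); last by move=> c /andP[_ /eqP ->].
by rewrite -[LHS]mulr_suml -[RHS]mulr_suml; congr (_ * _); exact: sum_card_avg.
Qed.

Lemma fiber_sum1 (A : {set 'I_N}) (c0 : col) (g : col -> R) (l : 'I_N) :
  \sum_(c | inO A c0 c) g c = \sum_(c | inO A c0 c) phi A c0 g l (c l).
Proof.
have := fiber_sum A c0 g l (fun _ => 1).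
by under eq_bigr do rewrite mulr1; under [in X in _ = X -> _]eq_bigr do rewrite mulr1.
Qed.

Lemma fiber_mean0 (A : {set 'I_N}) (c0 : col) (g : col -> R) (l : 'I_N) (a : 'I_r) :
  \sum_(c | inO A c0 c && (c l == a)) (g c - phi A c0 g l a) = 0.
Proof.
by rewrite sumrB {1}sum_card_avg subrr.
Qed.


Section KLemma.
Variables (A : {set 'I_N}) (c0 : col) (g : col -> R) (n : nat).
Hypothesis hA : #|A| = n.
Hypothesis hn : (2 <= n)%N.
Hypothesis hg : \sum_(c | inO A c0 c) g c = 0.

Local Notation ps l c := (phi A c0 g l (c l)).
Local Notation SO := (fun F => \sum_(c | inO A c0 c) (F c : R)).

Lemma sym_pos (l l0 : 'I_N) (G : 'I_r -> R) : l \in A -> l0 \in A ->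
  \sum_(c | inO A c0 c) G (c l) = \sum_(c | inO A c0 c) G (c l0).
Proof.
move=> lA l0A; rewrite (sum_sw _ _ lA l0A).
by apply: eq_bigr => c _; rewrite ffunE tpermL.
Qed.

Lemma cardO_gt0 : (0 < #|[pred c | inO A c0 c]|)%N.
Proof. by apply/card_gt0P; exists c0; rewrite inE inO_refl. Qed.

Lemma K0 (j : 'I_N) : j \in A -> \sum_(j' in A) phi A c0 g j (c0 j') = 0.
Proof.
move=> jA.
have E : \sum_(c | inO A c0 c) \sum_(j' in A) phi A c0 g j (c j') =
    (\sum_(j' in A) phi A c0 g j (c0 j')) *+ #|[pred c | inO A c0 c]|.
  by rewrite -sumr_const; apply: eq_bigr => c Hc; rewrite (sum_pos_const _ Hc).
have E2 : \sum_(c | inO A c0 c) \sum_(j' in A) phi A c0 g j (c j') = 0.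
  rewrite exchange_big /=; apply: big1 => j' j'A.
  by rewrite -(sym_pos _ jA j'A) -fiber_sum1.
move: E; rewrite E2 => /esym/eqP; rewrite mulrn_eq0 => /orP[|/eqP//].
by move=> /eqP H0; move: cardO_gt0; rewrite H0.
Qed.

Lemma cardAD1 (l : 'I_N) : l \in A -> #|[pred j | (j \in A) && (j != l)]| = n.-1.
Proof.
move=> lA; have := cardsD1 l A; rewrite lA hA => ->.
by rewrite add1n /=; apply: eq_card => j; rewrite !inE andbC.
Qed.

Lemma Ylem (l j : 'I_N) : l \in A -> j \in A -> l != j ->
  (n.-1)%:R * \sum_(c | inO A c0 c) ps l c * ps j c =
  - \sum_(c | inO A c0 c) ps l c * phi A c0 g j (c l).
Proof.
move=> lA jA ljn.
have E1 : \sum_(c | inO A c0 c) ps l c * \sum_(j' in A | j' != l) phi A c0 g j (c j')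
   = - \sum_(c | inO A c0 c) ps l c * phi A c0 g j (c l).
  rewrite -sumrN; apply: eq_bigr => c Hc.
  have := sum_pos_const (fun a => phi A c0 g j a) Hc; rewrite K0 // (bigD1 l) //=.
  by move=> /eqP; rewrite addrC addr_eq0 => /eqP ->; rewrite mulrN.
rewrite -E1 [RHS](eq_bigr (fun c : col => \sum_(j' in A | j' != l) ps l c * phi A c0 g j (c j')));
  last by move=> c _; rewrite mulr_sumr.
rewrite [RHS]exchange_big /=.
rewrite [RHS](eq_bigr (fun _ => \sum_(c | inO A c0 c) ps l c * ps j c)).
  rewrite sumr_const mulr_natl; congr (_ *+ _); rewrite -(cardAD1 lA).
  by apply: eq_card => x.
move=> j' /andP[j'A j'l]; rewrite (sum_sw _ _ jA j'A); apply: eq_bigr => c _.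
by rewrite !ffunE tpermR tpermD // eq_sym.
Qed.

Definition hh (c : col) : R := \sum_(l in A) ps l c.
Definition ss : R := \sum_(l in A) \sum_(c | inO A c0 c) ps l c ^+ 2.

Lemma hg_eq : \sum_(c | inO A c0 c) hh c * g c = ss.
Proof.
rewrite /hh /ss; under eq_bigr do rewrite mulr_suml.
rewrite exchange_big /=; apply: eq_bigr => l _.
rewrite (eq_bigr (fun c : col => g c * phi A c0 g l (c l))); last by move=> c _; rewrite mulrC.
by rewrite fiber_sum; apply: eq_bigr => c _; rewrite expr2.
Qed.

Lemma Z_ge0 : 0 <= \sum_(l in A) \sum_(j in A) \sum_(c | inO A c0 c) ps l c * phi A c0 g j (c l).
Proof.
have [l0 l0A] : exists l0, l0 \in A.
  apply/card_gt0P; rewrite hA; exact: leq_trans hn.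
set Psi := fun a => \sum_(j in A) phi A c0 g j a.
rewrite (eq_bigr (fun l => \sum_(c | inO A c0 c) phi A c0 g l (c l0) * Psi (c l0))).
  rewrite exchange_big /=; apply: sumr_ge0 => c _.
  by rewrite -mulr_suml -expr2 sqr_ge0.
move=> l lA; rewrite exchange_big /=.
rewrite (eq_bigr (fun c : col => phi A c0 g l (c l) * Psi (c l))); last first.
  by move=> c _; rewrite /Psi mulr_sumr.
exact: (sym_pos (fun a => phi A c0 g l a * Psi a) lA l0A).
Qed.

Lemma hsq : (n.-1)%:R * \sum_(c | inO A c0 c) hh c ^+ 2 <= n%:R * ss.
Proof.
set Z := \sum_(l in A) \sum_(j in A) \sum_(c | inO A c0 c) ps l c * phi A c0 g j (c l).
have S1 : \sum_(c | inO A c0 c) hh c ^+ 2 =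
    \sum_(l in A) \sum_(j in A) \sum_(c | inO A c0 c) ps l c * ps j c.
  rewrite (eq_bigr (fun c : col => \sum_(l in A) \sum_(j in A) ps l c * ps j c)); last first.
    by move=> c _; rewrite expr2 /hh mulr_suml; apply: eq_bigr => l _; rewrite mulr_sumr.
  rewrite exchange_big; apply: eq_bigr => l _ /=; by rewrite exchange_big.
have n1 : n%:R = (n.-1)%:R + 1 :> R.
  by rewrite -{1}(prednK (ltnW hn)) -natr1.
have S2 : forall l, l \in A ->
    (n.-1)%:R * \sum_(j in A) \sum_(c | inO A c0 c) ps l c * ps j c =
    n%:R * \sum_(c | inO A c0 c) ps l c ^+ 2 -
    \sum_(j in A) \sum_(c | inO A c0 c) ps l c * phi A c0 g j (c l).
  move=> l lA; rewrite (bigD1 l) //= [in RHS](bigD1 l) //= mulrDr.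
  have -> : (n.-1)%:R * \sum_(j in A | j != l) \sum_(c | inO A c0 c) ps l c * ps j c =
      - \sum_(j in A | j != l) \sum_(c | inO A c0 c) ps l c * phi A c0 g j (c l).
    rewrite mulr_sumr -sumrN; apply: eq_bigr => j /andP[jA jl].
    by rewrite Ylem // eq_sym.
  have -> : \sum_(c | inO A c0 c) ps l c ^+ 2 = \sum_(c | inO A c0 c) ps l c * ps l c.
    by apply: eq_bigr => c _; rewrite expr2.
  by rewrite n1 mulrDl mul1r opprD addrA addrK.
have E : (n.-1)%:R * \sum_(c | inO A c0 c) hh c ^+ 2 = n%:R * ss - Z.
  by rewrite S1 mulr_sumr (eq_bigr _ S2) sumrB /ss mulr_sumr.
rewrite E lerBlDr lerDl; exact: Z_ge0.
Qed.

Definition uu (c : col) : R := (n.-1)%:R * hh c - n%:R * g c.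

Lemma uu_bound : \sum_(c | inO A c0 c) uu c ^+ 2 <=
  n%:R * (n%:R * \sum_(c | inO A c0 c) g c ^+ 2 - (n.-1)%:R * ss).
Proof.
have E : \sum_(c | inO A c0 c) uu c ^+ 2 =
   (n.-1)%:R * ((n.-1)%:R * \sum_(c | inO A c0 c) hh c ^+ 2)
   - (2 * n%:R * (n.-1)%:R) * \sum_(c | inO A c0 c) hh c * g c
   + n%:R ^+ 2 * \sum_(c | inO A c0 c) g c ^+ 2.
  rewrite !mulr_sumr -sumrB -big_split; apply: eq_bigr => c _.
  rewrite /uu /=; ring.
rewrite E hg_eq.
have := hsq; set H := \sum_(c | _) hh c ^+ 2 => hH.
have hn1 : 0 <= (n.-1)%:R :> R by apply: ler0n.
have : (n.-1)%:R * ((n.-1)%:R * H) <= (n.-1)%:R * (n%:R * ss) by apply: ler_wpM2l.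
set G := \sum_(c | _) g c ^+ 2.
move=> h2; nra.
Qed.

Lemma s_le : (n.-1)%:R * ss <= n%:R * \sum_(c | inO A c0 c) g c ^+ 2.
Proof.
have h0 : 0 <= \sum_(c | inO A c0 c) uu c ^+ 2 by apply: sumr_ge0 => c _; apply: sqr_ge0.
have := le_trans h0 uu_bound.
rewrite pmulr_rge0 ?subr_ge0 //; rewrite ltr0n; exact: leq_trans hn.
Qed.

Lemma s_eq : n%:R * \sum_(c | inO A c0 c) g c ^+ 2 <= (n.-1)%:R * ss ->
  forall c, inO A c0 c -> (n.-1)%:R * hh c = n%:R * g c.
Proof.
move=> H c Hc.
have h1 : \sum_(c | inO A c0 c) uu c ^+ 2 <= 0.
  apply: (le_trans uu_bound); rewrite pmulr_rle0 ?subr_le0 //.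
  rewrite ltr0n; exact: leq_trans hn.
have h0 : \sum_(c | inO A c0 c) uu c ^+ 2 = 0.
  by apply/eqP; rewrite eq_le h1 sumr_ge0 // => ? _; apply: sqr_ge0.
have := psumr_eq0P (fun i _ => sqr_ge0 (uu i)) h0 Hc.
by move/eqP; rewrite sqrf_eq0 subr_eq0 => /eqP.
Qed.

End KLemma.


Lemma two_vals (T:eqType) (a b a' b' : T) :
  (forall m, ((a'==m) + (b'==m) = (a==m) + (b==m))%N) -> (a'=a /\ b'=b) \/ (a'=b /\ b'=a).
Proof.
move=> H; case: (a' =P a) => [Ea|na].
  left; split=> //; move: (H b'); rewrite Ea eqxx.
  by case: (b =P b') => // _; case: (a == b'); lia.
right; move: (H a); rewrite eqxx (introF eqP na) /=.
case: (b' =P a) => [Eb|]; last by case: (b == a); lia.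
move=> _; move: (H a'); rewrite eqxx Eb eq_sym (introF eqP na) /=.
by case: (b =P a') => [->|]; [split | case: (a == a'); lia].
Qed.

Lemma cnt2 (i j : 'I_N) (P : pred 'I_N) : i != j ->
  #|[set t in [set i; j] | P t]| = (P i + P j)%N.
Proof.
move=> ij; have iA : i \in [set i; j] by rewrite !inE eqxx.
rewrite (cnt_split _ iA).
have jA : j \in [set i; j] :\ i by rewrite !inE eqxx orbT andbT eq_sym.
rewrite (cnt_split _ jA) addnA -[RHS]addn0; congr (_ + _)%N.
apply/eqP; rewrite cards_eq0; apply/eqP/setP => t; rewrite !inE.
by case: (t =P j); case: (t =P i).
Qed.

Lemma two_pt (i j : 'I_N) (c c' : col) : i != j ->
  inO [set i; j] c c' -> c' = c \/ c' = sw i j c.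
Proof.
move=> ij /andP[/forallP G1 /forallP G2].
have Hm : forall m, ((c' i == m) + (c' j == m) = (c i == m) + (c j == m))%N.
  by move=> m; have := eqP (G2 m); rewrite !cnt2.
have out : forall t, t != i -> t != j -> c' t = c t.
  move=> t ti tj; apply/eqP; apply: (implyP (G1 t)).
  by rewrite !inE negb_or ti tj.
case: (two_vals Hm) => [[E1 E2]|[E1 E2]]; [left|right]; apply/ffunP => t;
  rewrite ?ffunE; case: (t =P i) => [->|/eqP ti];
  rewrite ?tpermL ?E1 //; case: (t =P j) => [->|/eqP tj]; rewrite ?tpermR ?E2 //;
  rewrite ?tpermD 1?eq_sym //; exact: out.
Qed.

Definition Qdef (A : {set 'I_N}) (c0 : col) (g : col -> R) : R :=
  \sum_(c | inO A c0 c) \sum_(i in A) \sum_(j in A | j != i) (g c - g (sw i j c)) ^+ 2.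

Lemma sum2 (i j : 'I_N) (F : 'I_N -> R) : i != j ->
  \sum_(t in [set i; j]) F t = F i + F j.
Proof.
move=> ij; rewrite (bigD1 i) ?inE ?eqxx //=; congr (_ + _).
apply: big_pred1 => t; rewrite !inE /=.
have [->|ti] := eqVneq t i; first by rewrite /= (negbTE ij).
by rewrite /= andbT.
Qed.

Lemma sum2D (i j s : 'I_N) (F : 'I_N -> R) : i != j -> (s = i \/ s = j) ->
  \sum_(t in [set i; j] | t != s) F t = F (if s == i then j else i).
Proof.
move=> ij Hs; apply: big_pred1 => t; rewrite !inE /=.
case: Hs => ->; rewrite ?eqxx /=.
  have [->|ti] := eqVneq t i; first by rewrite /= (negbTE ij).
  by rewrite /= andbT.
rewrite [j == i]eq_sym (negbTE ij).
have [->|tj] := eqVneq t j; first by rewrite /= andbF eq_sym (negbTE ij).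
by rewrite /= orbF andbT.
Qed.

Lemma base2 (A : {set 'I_N}) (c0 : col) (g : col -> R) : #|A| = 2%N ->
  \sum_(c | inO A c0 c) g c = 0 ->
  4 * 2%:R * \sum_(c | inO A c0 c) g c ^+ 2 <= Qdef A c0 g.
Proof.
move=> /eqP/cards2P [i [j [ij ->]]] hg.
have key : forall c, inO [set i; j] c0 c -> g (sw i j c) = - g c.
  move=> c Hc.
  have Ho : forall c', inO [set i; j] c0 c' = (c' == c) || (c' == sw i j c).
    move=> c'; rewrite -(inO_trans c' Hc); apply/idP/idP.
      by case/(two_pt ij) => ->; rewrite eqxx ?orbT.
    case/orP => /eqP ->; first exact: inO_refl.
    by rewrite inO_sw ?inO_refl // !inE eqxx ?orbT.
  move: hg; rewrite (eq_bigl _ _ Ho).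
  case: (eqVneq (sw i j c) c) => [E|ne].
    rewrite (eq_bigl (pred1 c)); last by move=> c'; rewrite /= E orbb.
    by rewrite big_pred1_eq => H0; rewrite E H0 oppr0.
  rewrite (bigD1 c) ?eqxx //= (bigD1 (sw i j c)) /=; last by rewrite eqxx orbT ne.
  rewrite big1 ?addr0; last first.
    move=> x; case/andP; case/andP; case/orP=> /eqP ->; rewrite ?eqxx //.
  by move/eqP; rewrite addr_eq0 => /eqP ->; rewrite opprK.
rewrite /Qdef mulr_sumr le_eqVlt; apply/orP; left; apply/eqP.
apply: eq_bigr => c Hc; rewrite sum2 // !sum2D // ?eqxx; auto.
by rewrite [j == i]eq_sym (negbTE ij) (swC j i) key //; ring.
Qed.


Lemma triple (A : {set 'I_N}) (F : 'I_N -> 'I_N -> R) :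
  \sum_(l in A) \sum_(i in A :\ l) \sum_(j in A :\ l | j != i) F i j =
  \sum_(i in A) \sum_(j in A | j != i) F i j *+ #|A :\ i :\ j|.
Proof.
have E1 : \sum_(l in A) \sum_(i in A :\ l) \sum_(j in A :\ l | j != i) F i j =
   \sum_(l in A) \sum_i \sum_j
     (if (i \in A :\ l) && ((j \in A :\ l) && (j != i)) then F i j else 0).
  apply: eq_bigr => l _; rewrite big_mkcond; apply: eq_bigr => i _.
  case: (i \in A :\ l) => /=; last by rewrite big1.
  by rewrite big_mkcond.
rewrite E1 exchange_big /=.
rewrite (bigID (fun i => i \in A)) /= [X in _ + X]big1 ?addr0; last first.
  move=> i iA; apply: big1 => l lA; apply: big1 => j _.
  by rewrite !inE (negbTE iA) /= andbF.
apply: eq_bigr => i iA /=.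
rewrite exchange_big /=.
rewrite (bigID (fun j => (j \in A) && (j != i))) /= [X in _ + X]big1 ?addr0; last first.
  move=> j jc; apply: big1 => l lA; rewrite !inE.
  by rewrite iA; move: jc; case: (j \in A); case: (j != i); case: (i != l); case: (j != l).
apply: eq_bigr => j /andP[jA ji].
rewrite -big_mkcondr /= sumr_const; congr (_ *+ _); apply: eq_card => l.
rewrite unfold_in /= !inE iA jA ji /= !andbT [i == l]eq_sym [j == l]eq_sym.
by case: (l \in A); case: (l != i); case: (l != j).
Qed.


Definition Gdef (n : nat) := forall (A : {set 'I_N}) (c0 : col) (g : col -> R),
  #|A| = n -> \sum_(c | inO A c0 c) g c = 0 ->
  4 * n%:R * \sum_(c | inO A c0 c) g c ^+ 2 <= Qdef A c0 g.

Lemma Qfib (n : nat) (A : {set 'I_N}) (c0 : col) (g : col -> R) (l : 'I_N) :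
  Gdef n.-1 -> #|A| = n -> l \in A ->
  4 * (n.-1)%:R * \sum_(c | inO A c0 c) (g c - phi A c0 g l (c l)) ^+ 2 <=
  \sum_(c | inO A c0 c) \sum_(i in A :\ l) \sum_(j in A :\ l | j != i)
     (g c - g (sw i j c)) ^+ 2.
Proof.
move=> IH hA lA.
have hAl : #|A :\ l| = n.-1 by move: (cardsD1 l A); rewrite lA hA => ->.
rewrite (partition_big (fun c : col => c l) predT) //=.
rewrite [X in _ <= X](partition_big (fun c : col => c l) predT) //=.
rewrite mulr_sumr; apply: ler_sum => a _.
case: (pickP (fun c : col => inO A c0 c && (c l == a))) => [c1 Hc1 | Hno]; last first.
  by rewrite !big_pred0 ?mulr0.
move/andP: Hc1 => [Hc1 /eqP Ea]; rewrite -Ea.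
have EP : forall c, inO A c0 c && (c l == c1 l) = inO (A :\ l) c1 c.
  by move=> c; apply: fiberE.
rewrite !(eq_bigl _ _ EP).
set g' := fun c : col => g c - phi A c0 g l (c1 l).
have hm : \sum_(c | inO (A :\ l) c1 c) g' c = 0.
  by rewrite -(eq_bigl _ _ EP) fiber_mean0.
have := IH _ _ _ hAl hm; rewrite /Qdef.
have -> : \sum_(c | inO (A :\ l) c1 c) g' c ^+ 2 =
          \sum_(c | inO (A :\ l) c1 c) (g c - phi A c0 g l (c l)) ^+ 2.
  apply: eq_bigr => c Hc; move: Hc; rewrite -EP => /andP[_ /eqP ->] //.
move=> H; apply: (le_trans H) => {H}; rewrite le_eqVlt; apply/orP; left; apply/eqP.
apply: eq_bigr => c _; apply: eq_bigr => i _; apply: eq_bigr => j _.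
by rewrite /g'; congr (_ ^+ 2); ring.
Qed.

Lemma fib_sq (A : {set 'I_N}) (c0 : col) (g : col -> R) (l : 'I_N) :
  \sum_(c | inO A c0 c) (g c - phi A c0 g l (c l)) ^+ 2 =
  \sum_(c | inO A c0 c) g c ^+ 2 - \sum_(c | inO A c0 c) phi A c0 g l (c l) ^+ 2.
Proof.
have E := fiber_sum A c0 g l (phi A c0 g l).
have -> : \sum_(c | inO A c0 c) (g c - phi A c0 g l (c l)) ^+ 2 =
   \sum_(c | inO A c0 c) g c ^+ 2 - 2 * \sum_(c | inO A c0 c) g c * phi A c0 g l (c l)
   + \sum_(c | inO A c0 c) phi A c0 g l (c l) ^+ 2.
  rewrite mulr_sumr -sumrB -big_split; apply: eq_bigr => c _ /=; ring.
rewrite E.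
have -> : \sum_(c | inO A c0 c) phi A c0 g l (c l) * phi A c0 g l (c l) =
   \sum_(c | inO A c0 c) phi A c0 g l (c l) ^+ 2 by apply: eq_bigr => c _; rewrite expr2.
ring.
Qed.

Lemma step (n : nat) (A : {set 'I_N}) (c0 : col) (g : col -> R) :
  (3 <= n)%N -> Gdef n.-1 -> #|A| = n ->
  4 * (n.-1)%:R * (n%:R * \sum_(c | inO A c0 c) g c ^+ 2 - ss A c0 g) <=
  (n.-2)%:R * Qdef A c0 g.
Proof.
move=> hn IH hA.
have E : (n.-2)%:R * Qdef A c0 g =
  \sum_(l in A) \sum_(c | inO A c0 c) \sum_(i in A :\ l) \sum_(j in A :\ l | j != i)
     (g c - g (sw i j c)) ^+ 2.
  rewrite exchange_big /Qdef mulr_sumr; apply: eq_bigr => c _ /=.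
  rewrite triple mulr_sumr; apply: eq_bigr => i iA; rewrite mulr_sumr.
  apply: eq_bigr => j /andP[jA ji].
  rewrite mulr_natl; congr (_ *+ _).
  move: (cardsD1 i A) (cardsD1 j (A :\ i)); rewrite iA hA !inE ji jA => -> /=.
  by move=> ->; rewrite !add1n.
rewrite E.
have E2 : \sum_(l in A) 4 * (n.-1)%:R *
     (\sum_(c | inO A c0 c) g c ^+ 2 - \sum_(c | inO A c0 c) phi A c0 g l (c l) ^+ 2)
   = 4 * (n.-1)%:R * (n%:R * \sum_(c | inO A c0 c) g c ^+ 2 - ss A c0 g).
  rewrite -mulr_sumr sumrB sumr_const /ss; congr (_ * (_ - _)).
  by rewrite hA mulr_natl.
rewrite -E2; apply: ler_sum => l lA; rewrite -fib_sq.
exact: Qfib IH hA lA.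
Qed.

Lemma Gall (n : nat) : (2 <= n)%N -> Gdef n.
Proof.
elim: n => [//|n IH] hn.
case: (ltnP n 2) => hn2.
  have -> : n.+1 = 2%N by lia.
  move=> A c0 g hA hg; exact: base2.
have IHn := IH hn2.
move=> A c0 g hA hg.
have h3 : (3 <= n.+1)%N by lia.
have hs := step c0 g h3 IHn hA.
have hle := s_le hA hn hg.
rewrite /= in hs hle.
set G := \sum_(c | inO A c0 c) g c ^+ 2 in hs hle *.
set Q := Qdef A c0 g in hs *.
set s := ss A c0 g in hs hle.
have n0 : (0 < n)%N by lia.
have e1 : (n.-1)%:R = n%:R - 1 :> R by rewrite -[in RHS](prednK n0) -natr1 addrK.
have e2 : (n.+1)%:R = n%:R + 1 :> R by rewrite natr1.
rewrite e1 e2 in hs hle; rewrite e2.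
have hn' : 2%:R <= n%:R :> R by rewrite ler_nat.
have key : (n%:R - 1) * (4 * (n%:R + 1) * G) <= (n%:R - 1) * Q.
  apply: le_trans hs; nra.
by rewrite ler_pM2l in key; [|lra].
Qed.

End Abs.

Section Transfer.
Variables (R : realFieldType) (N r : nat) (e : 'I_r -> R) (k : 'I_r -> nat).
Hypothesis he : injective e.
Local Notation col := {ffun 'I_N -> 'I_r}.

Definition rho (c : col) : 'rV[R]_N := \row_(i < N) e (c i).

Lemma rho_inj : injective rho.
Proof.
move=> c c' E; apply/ffunP => i; apply: he.
by move/matrixP: E => /(_ 0 i); rewrite !mxE.
Qed.

Lemma ms_eq : multislice N e k = [seq rho c | c <- enum (ms_pattern k)].
Proof.
rewrite /multislice undup_id //; rewrite map_inj_uniq ?enum_uniq //; exact: rho_inj.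
Qed.

Lemma mem_ms x : x \in multislice N e k -> exists c, ms_pattern k c /\ x = rho c.
Proof. by rewrite ms_eq => /mapP[c]; rewrite mem_enum => Hc ->; exists c. Qed.

Lemma rho_ms c : ms_pattern k c -> rho c \in multislice N e k.
Proof. by move=> Hc; rewrite ms_eq; apply: map_f; rewrite mem_enum. Qed.

Lemma sum_ms (P : pred 'rV[R]_N) (F : 'rV[R]_N -> R) :
  \sum_(y <- multislice N e k | P y) F y = \sum_(c | ms_pattern k c && P (rho c)) F (rho c).
Proof. by rewrite ms_eq big_map big_enum_cond. Qed.

Lemma count_ms (P : pred 'rV[R]_N) :
  count P (multislice N e k) = #|[set c | ms_pattern k c && P (rho c)]|.
Proof.
rewrite ms_eq -sum1_count big_map big_enum_cond sum1_card cardsE.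
by apply: eq_card => c; rewrite unfold_in.
Qed.

Lemma inO_pat (c0 c : col) : ms_pattern k c0 -> inO setT c0 c = ms_pattern k c.
Proof.
move=> /forallP H0; rewrite /inO /ms_pattern.
have -> : [forall i, (i \notin [set: 'I_N]) ==> (c i == c0 i)] = true.
  by apply/forallP => i; rewrite in_setT.
apply: eq_forallb => m; rewrite -(eqP (H0 m)).
have E : forall d : col, #|[set i in [set: 'I_N] | d i == m]| = #|[set i | d i == m]|.
  by move=> d; apply: eq_card => i; rewrite !inE.
by rewrite !E.
Qed.


Definition Lc (g : col -> R) (c : col) : R :=
  \sum_i \sum_(j | j != i) (g c - g (sw i j c)).

Lemma swap_rho (i j : 'I_N) (c : col) : swap_coords i j (rho c) = rho (sw i j c).
Proof. by apply/matrixP => a t; rewrite !mxE ffunE. Qed.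

Lemma pat_sw (i j : 'I_N) (c : col) : ms_pattern k c -> ms_pattern k (sw i j c).
Proof.
move=> Hc; rewrite -(inO_pat (sw i j c) Hc) inO_sw ?in_setT //; exact: inO_refl.
Qed.

Lemma sw_id (i j : 'I_N) (c : col) : c i = c j -> sw i j c = c.
Proof.
move=> E; apply/ffunP => t; rewrite ffunE.
by case: tpermP => [->|->|] //; rewrite E.
Qed.

Lemma sw_out (i j t : 'I_N) (c : col) : (sw i j c) t != c t -> (t == i) || (t == j).
Proof.
rewrite ffunE; case: tpermP => [->|->|]; rewrite ?eqxx ?orbT //.
Qed.

Lemma sw_pair_inj (c : col) :
  {in [set p : 'I_N * 'I_N | (p.1 < p.2)%N && (sw p.1 p.2 c != c)] &,
    injective (fun p : 'I_N * 'I_N => sw p.1 p.2 c)}.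
Proof.
move=> [i j] [i' j']; rewrite !inE /= => /andP[ij ne] /andP[ij' _] E.
have cij : c i != c j by apply: contraNneq ne => /sw_id ->.
have h1 : (i == i') || (i == j').
  apply: (@sw_out i' j' i c); rewrite -E ffunE tpermL; by rewrite eq_sym.
have h2 : (j == i') || (j == j').
  by apply: (@sw_out i' j' j c); rewrite -E ffunE tpermR.
case/orP: h1 => /eqP Ei; case/orP: h2 => /eqP Ej; subst.
all: try by rewrite eqxx in cij.
all: try done.
all: lia.
Qed.

Lemma sym_pairs (H : 'I_N -> 'I_N -> R) : (forall i j : 'I_N, H i j = H j i) ->
  \sum_(i : 'I_N) \sum_(j : 'I_N | j != i) H i j = 2 * \sum_(i : 'I_N) \sum_(j : 'I_N | (i < j)%N) H i j.
Proof.
move=> Hs.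
have E1 : forall i : 'I_N, \sum_(j | j != i) H i j =
    \sum_(j : 'I_N | (i < j)%N) H i j + \sum_(j : 'I_N | (j < i)%N) H i j.
  move=> i; rewrite (bigID (fun j : 'I_N => (i < j)%N)) /=; congr (_ + _); apply: eq_bigl => j.
    by rewrite neq_ltn; case: (i < j)%N; rewrite ?orbT ?andbT ?andbF //= ltnNge ltnW.
  rewrite neq_ltn; case: ltngtP => //=.
rewrite (eq_bigr _ (fun i _ => E1 i)) big_split /=.
rewrite [X in _ + X](exchange_big_dep (fun _ => true)) //=.
rewrite [X in _ + X](eq_bigr (fun j : 'I_N => \sum_(i : 'I_N | (j < i)%N) H j i)); last first.
  by move=> j _; apply: eq_bigr => i _; rewrite Hs.
by rewrite -mulr2n mulr_natl.
Qed.

Lemma lap_rho (f : 'rV[R]_N -> R) (c : col) : ms_pattern k c ->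
  2 * ms_laplacian e k f (rho c) = Lc (fun d => f (rho d)) c.
Proof.
move=> Hc; rewrite /ms_laplacian sum_ms.
set D := [set p : 'I_N * 'I_N | (p.1 < p.2)%N && (sw p.1 p.2 c != c)].
set S := [set sw p.1 p.2 c | p in D].
rewrite (eq_bigl (fun c' => c' \in S)); last first.
  move=> c'; rewrite (inj_eq rho_inj).
  apply/idP/idP.
    case/andP => Hc' /andP[ne /existsP[i /existsP[j /andP[ij /eqP E]]]].
    rewrite swap_rho in E; move/rho_inj: E => E.
    by apply/imsetP; exists (i, j) => //; rewrite inE /= ij -E ne.
  case/imsetP => [[i j]]; rewrite inE /= => /andP[ij ne] ->.
  rewrite pat_sw // ne /=; apply/existsP; exists i; apply/existsP; exists j.
  by rewrite ij swap_rho eqxx.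
rewrite big_imset /=; last exact: sw_pair_inj.
rewrite /Lc (sym_pairs (H := fun i j => f (rho c) - f (rho (sw i j c)))); last first.
  by move=> i j; rewrite swC.
congr (_ * _); rewrite pair_big_dep /=.
rewrite [RHS](bigID (fun p : 'I_N * 'I_N => sw p.1 p.2 c != c)) /=.
rewrite [X in _ = _ + X]big1 ?addr0; last first.
  by move=> p /andP[_]; rewrite negbK => /eqP ->; rewrite subrr.
by apply: eq_bigl => p; rewrite inE.
Qed.

End Transfer.

Section Main.
Variables (R : realFieldType) (N r : nat).
Local Notation col := {ffun 'I_N -> 'I_r}.

Lemma star (F : 'I_r -> R) (c : col) (l : 'I_N) :
  \sum_(i : 'I_N) \sum_(j | j != i) (F (c l) - F (c (tperm i j l))) =
  2 * (N%:R * F (c l) - \sum_j F (c j)).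
Proof.
have X_eq : \sum_(j | j != l) (F (c l) - F (c j)) = N%:R * F (c l) - \sum_j F (c j).
  have X0 : \sum_j (F (c l) - F (c j)) = \sum_(j | j != l) (F (c l) - F (c j)).
    by rewrite (bigD1 l) //= subrr add0r.
  by rewrite -X0 sumrB sumr_const card_ord mulr_natl.
rewrite [LHS](bigD1 l) //=.
rewrite (eq_bigr (fun j => F (c l) - F (c j))); last by move=> j _; rewrite tpermL.
rewrite [X in _ + X](eq_bigr (fun i => F (c l) - F (c i))); last first.
  move=> i il; rewrite (bigD1 l) 1?eq_sym //= tpermR big1 ?addr0 //.
  move=> j /andP[ji jl]; rewrite tpermD ?subrr // eq_sym //.
by rewrite !X_eq mulr2n mulrDl mul1r.
Qed.


Lemma sumLc0 (c0 : col) (g : col -> R) :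
  \sum_(c | inO setT c0 c) Lc g c = 0.
Proof.
rewrite /Lc exchange_big /=; apply: big1 => i _.
rewrite exchange_big /=; apply: big1 => j _.
by rewrite sumrB -(sum_sw _ _ (in_setT i) (in_setT j)) subrr.
Qed.

Lemma Q_Lc (c0 : col) (g : col -> R) :
  Qdef setT c0 g = 2 * \sum_(c | inO setT c0 c) g c * Lc g c.
Proof.
rewrite /Qdef /Lc mulr_sumr.
have E : forall c, \sum_(i in [set: 'I_N]) \sum_(j in [set: 'I_N] | j != i)
     (g c - g (sw i j c)) ^+ 2 =
   \sum_i \sum_(j | j != i) (g c - g (sw i j c)) ^+ 2.
  move=> c; rewrite (eq_bigl (fun _ => true)); last by move=> i; rewrite in_setT.
  apply: eq_bigr => i _; by apply: eq_bigl => j; rewrite in_setT.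
rewrite (eq_bigr _ (fun c _ => E c)).
have R1 : \sum_(c | inO setT c0 c) 2 * (g c * \sum_i \sum_(j | j != i) (g c - g (sw i j c)))
   = \sum_(c | inO setT c0 c) \sum_i \sum_(j | j != i) 2 * (g c * (g c - g (sw i j c))).
  apply: eq_bigr => c _; rewrite mulr_sumr mulr_sumr; apply: eq_bigr => i _.
  by rewrite mulr_sumr mulr_sumr.
rewrite R1 exchange_big [RHS]exchange_big; apply: eq_bigr => i _ /=.
rewrite exchange_big [RHS]exchange_big; apply: eq_bigr => j _ /=.
rewrite (eq_bigr (fun c => g c * (g c - g (sw i j c)) +
     g (sw i j c) * (g (sw i j c) - g c))); last by move=> c _; ring.
rewrite big_split /=.
rewrite [X in _ + X](sum_sw _ _ (in_setT i) (in_setT j)) /=.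
rewrite -big_split /=; apply: eq_bigr => c _; rewrite swK; ring.
Qed.

Lemma sum_hh (c0 : col) (g : col -> R) :
  \sum_(c | inO setT c0 c) hh setT c0 g c = N%:R * \sum_(c | inO setT c0 c) g c.
Proof.
rewrite /hh exchange_big /= (eq_bigr (fun _ => \sum_(c | inO setT c0 c) g c)).
  by rewrite sumr_const mulr_natl cardsT card_ord.
by move=> l _; rewrite -fiber_sum1.
Qed.

End Main.

Section Transfer2.
Variables (R : realFieldType) (N r : nat) (e : 'I_r -> R) (k : 'I_r -> nat).
Hypothesis he : injective e.
Local Notation col := {ffun 'I_N -> 'I_r}.

Lemma proj_rho (f : 'rV[R]_N -> R) (l : 'I_N) (c0 c : col) :
  ms_pattern k c0 -> ms_pattern k c ->
  ms_proj e k l f (rho e c) = phi setT c0 (fun d => f (rho e d)) l (c l).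
Proof.
move=> H0 Hc; rewrite /ms_proj /phi (sum_ms k he) (count_ms k he).
have E : forall d : col, ms_pattern k d && ((rho e d) 0 l == (rho e c) 0 l) =
    inO setT c0 d && (d l == c l).
  by move=> d; rewrite !mxE (inj_eq he) (inO_pat _ H0).
rewrite (eq_bigl _ _ E); congr (_ / _%:R); apply: eq_card => d; by rewrite !inE E.
Qed.

Lemma P_rho (f : 'rV[R]_N -> R) (c0 c : col) :
  ms_pattern k c0 -> ms_pattern k c ->
  ms_P e k f (rho e c) = N%:R^-1 * hh setT c0 (fun d => f (rho e d)) c.
Proof.
move=> H0 Hc; rewrite /ms_P /hh; congr (_ * _).
rewrite [RHS](eq_bigl (fun _ => true)); last by move=> i; rewrite in_setT.
by apply: eq_bigr => l _; rewrite (proj_rho _ _ H0 Hc).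
Qed.

End Transfer2.

Unset Implicit Arguments.

Theorem mainTheorem8 (R : realFieldType) (N r : nat) (e : 'I_r -> R)
    (k : 'I_r -> nat)
    (hN : (3 <= N)%N) (hr : (2 <= r)%N) (he : injective e)
    (hk : (\sum_(m < r) k m)%N = N) (hk1 : forall m : 'I_r, (1 <= k m)%N)
    (f : 'rV[R]_N -> R) :
  (forall x, x \in multislice N e k ->
     ms_laplacian e k f x = N%:R * f x) <->
  (forall x, x \in multislice N e k ->
     ms_P e k f x = (N%:R - 1)^-1 * f x).
Proof.
set g := fun d : {ffun 'I_N -> 'I_r} => f (rho e d).
have hT : #|[set: 'I_N]| = N by rewrite cardsT card_ord.
have hN2 : (2 <= N)%N by lia.
have n0 : (0 < N)%N by lia.
have e1 : (N.-1)%:R = N%:R - 1 :> R by rewrite -[in RHS](prednK n0) -natr1 addrK.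
have e2 : (N.-2)%:R = N%:R - 2 :> R.
  have -> : N = (N.-2).+2 by lia.
  by rewrite -[in RHS]natr1 -[in RHS]natr1 /=; ring.
have N3 : 3%:R <= N%:R :> R by rewrite ler_nat.
split.
- move=> HL x /(mem_ms he) [c0 [Hc0 ->]].
  have HLc : forall c, inO setT c0 c -> Lc g c = 2 * N%:R * g c.
    move=> c; rewrite (inO_pat _ Hc0) => Hc.
    by rewrite /g -(lap_rho (k:=k) he f Hc) HL ?(rho_ms he) // mulrA.
  have hg : \sum_(c | inO setT c0 c) g c = 0.
    have := sumLc0 c0 g; rewrite (eq_bigr _ HLc) -mulr_sumr => /eqP.
    rewrite mulf_eq0 => /orP[H|/eqP //].
    by move: H; rewrite -natrM pnatr_eq0 => /eqP; lia.
  have hQ : Qdef setT c0 g = 4 * N%:R * \sum_(c | inO setT c0 c) g c ^+ 2.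
    rewrite Q_Lc (eq_bigr (fun c => 2 * N%:R * g c ^+ 2)).
      by rewrite -mulr_sumr mulrA; congr (_ * _); ring.
    by move=> c Hc; rewrite HLc // expr2; ring.
  have IH : @Gdef R N r N.-1 by apply: Gall; lia.
  have hs := step c0 g hN IH hT.
  rewrite hQ e1 e2 in hs.
  have hle : N%:R * \sum_(c | inO setT c0 c) g c ^+ 2 <= N.-1%:R * ss setT c0 g.
    rewrite e1; set G := \sum_(c | _) _ in hs *; set s := ss _ _ _ in hs *.
    nra.
  have := s_eq hT hN2 hg hle (inO_refl setT c0).
  rewrite (P_rho he f Hc0 Hc0) -/g e1 => H.
  have hn1 : N%:R - 1 != 0 :> R by apply/eqP; lra.
  have hn : N%:R != 0 :> R by apply/eqP; lra.
  by apply: (mulfI hn1); rewrite mulrCA H mulKf // mulVKf.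
- move=> HP x /(mem_ms he) [c0 [Hc0 ->]].
  have hn1 : N%:R - 1 != 0 :> R by apply/eqP; lra.
  have hn : N%:R != 0 :> R by apply/eqP; lra.
  have HPc : forall c, inO setT c0 c -> g c = (N%:R - 1) / N%:R * hh setT c0 g c.
    move=> c; rewrite (inO_pat _ Hc0) => Hc.
    have := HP _ (rho_ms he Hc); rewrite (P_rho he f Hc0 Hc) -/g => H.
    apply: (mulfI (invr_neq0 hn1)); rewrite -H; field; by rewrite hn hn1.
  have hg : \sum_(c | inO setT c0 c) g c = 0.
    have H1 := sum_hh c0 g.
    have H2 : \sum_(c | inO setT c0 c) g c =
        (N%:R - 1) / N%:R * \sum_(c | inO setT c0 c) hh setT c0 g c.
      by rewrite mulr_sumr; apply: eq_bigr => c Hc; rewrite HPc.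
    rewrite H1 in H2; set G := \sum_(c | _) g c in H2 *.
    have H3 : G = (N%:R - 1) * G by rewrite {1}H2; field.
    have : (N%:R - 2) * G = 0.
      transitivity ((N%:R - 1) * G - G); first ring.
      by rewrite -H3 subrr.
    by move/eqP; rewrite mulf_eq0 => /orP[/eqP H|/eqP //]; lra.
  have h2 : (2:R) != 0 by apply/eqP; lra.
  apply: (mulfI h2).
  rewrite (lap_rho he) // /Lc.
  rewrite (eq_bigr (fun i => \sum_(j | j != i)
      (N%:R - 1) / N%:R * (hh setT c0 g c0 - hh setT c0 g (sw i j c0)))); last first.
    move=> i _; apply: eq_bigr => j _.
    rewrite -/(g c0) -/(g (sw i j c0)).
    rewrite [g c0]HPc ?inO_refl // [g (sw i j c0)]HPc; first by ring.
    by rewrite inO_sw ?in_setT ?inO_refl.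
  under eq_bigr do rewrite -mulr_sumr.
  rewrite -mulr_sumr.
  have Hh : \sum_i \sum_(j | j != i) (hh setT c0 g c0 - hh setT c0 g (sw i j c0)) =
      2 * N%:R * hh setT c0 g c0.
    rewrite /hh.
    under eq_bigr do under eq_bigr do rewrite -sumrB.
    under eq_bigr do rewrite exchange_big /=.
    rewrite exchange_big /= mulr_sumr; apply: eq_bigr => l _.
    rewrite (eq_bigr (fun i => \sum_(j | j != i)
       (phi setT c0 g l (c0 l) - phi setT c0 g l (c0 (tperm i j l))))); last first.
      by move=> i _; apply: eq_bigr => j _; rewrite ffunE.
    rewrite star.
    have K := K0 hg (in_setT l).
    rewrite (eq_bigl (fun _ => true)) in K; last by move=> j; rewrite in_setT.
    by rewrite K subr0 mulrA.
  rewrite Hh -/(g c0) [g c0]HPc ?inO_refl //; field; by rewrite hn.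
Qed.
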